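(* Let $\mathcal{A}$ be a unital semiprime algebra over a field $F$ with $\operatorname{char}(F)\neq 2$. Then $\operatorname{GJDer}(\mathcal{A})=\operatorname{Cent}(\mathcal{A})+\operatorname{Der}(\mathcal{A})$.
   Context: $\mathcal{A}$ is semiprime if $a\mathcal{A}a=\{0\}$ implies $a=0$. For $x,y\in\mathcal{A}$ let $x\circ y=xy+yx$. $\operatorname{GJDer}(\mathcal{A})$ is the set of linear maps $f:\mathcal{A}\to\mathcal{A}$ for which there exist linear maps $g,h:\mathcal{A}\to\mathcal{A}$ with $f(x)\circ y+x\circ g(y)=h(x\circ y)$ for all $x,y\in\mathcal{A}$. $\operatorname{Cent}(\mathcal{A})$ is the set of linear maps $f$ with $f(xy)=f(x)y=xf(y)$ for all $x,y$ (centralizers). $\operatorname{Der}(\mathcal{A})$ is the set of derivations, i.e. linear $d$ with $d(xy)=d(x)y+xd(y)$. The sum of two sets of maps is the set of pointwise sums. *)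

(* Defs.v *)
From HB Require Import structures.
From mathcomp Require Import all_boot all_order all_algebra.
Set Implicit Arguments. Unset Strict Implicit. Unset Printing Implicit Defensive.
Import GRing.Theory.
Local Open Scope ring_scope.

Section Defs.
Variables (F : fieldType) (A : algType F).

Definition jprod (x y : A) : A := x * y + y * x.

Definition semiprime : Prop := forall a : A, (forall x : A, a * x * a = 0) -> a = 0.

Definition GJDer (f : A -> A) : Prop :=
  linear f /\
  exists g h : A -> A, linear g /\ linear h /\
    forall x y : A, jprod (f x) y + jprod x (g y) = h (jprod x y).

Definition Cent (f : A -> A) : Prop :=
  linear f /\ forall x y : A, f (x * y) = f x * y /\ f (x * y) = x * f y.

Definition Der (d : A -> A) : Prop :=
  linear d /\ forall x y : A, d (x * y) = d x * y + x * d y.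

End Defs.

(* Main.v *)
Require Import Defs.
From HB Require Import structures.
From mathcomp Require Import all_boot all_order all_algebra.
From Stdlib Require Import Ncring Ncring_tac FunctionalExtensionality.
Import GRing.Theory.
Local Open Scope ring_scope.

Section NC.
Variables (F : fieldType) (A : algType F).

#[local] Instance A_ops : @Ring_ops A 0 1 (@GRing.add A) (@GRing.mul A) (fun x y => x - y) (@GRing.opp A) (@eq A) := {}.

#[local] Program Instance A_ring : @Ring A 0 1 (@GRing.add A) (@GRing.mul A) (fun x y => x - y) (@GRing.opp A) (@eq A) A_ops.
Next Obligation. exact: add0r. Qed.
Next Obligation. exact: addrC. Qed.
Next Obligation. exact: addrA. Qed.
Next Obligation. exact: mul1r. Qed.
Next Obligation. exact: mulr1. Qed.
Next Obligation. exact: mulrA. Qed.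
Next Obligation. exact: mulrDl. Qed.
Next Obligation. exact: mulrDr. Qed.
Next Obligation. by []. Qed.
Next Obligation. exact: subrr. Qed.

Ltac ncr := non_commutative_ring.

Hypothesis hchar : 2 \notin [pchar F].
Hypothesis hsp : semiprime A.

Lemma two_ne0 : (2%:R : F) != 0.
Proof.
apply/negP => /eqP h; move/negP: hchar; apply; by rewrite inE h eqxx.
Qed.

Lemma two0 (u : A) : u + u = 0 -> u = 0.
Proof.
move=> h.
have : (2%:R : F) *: u = 0 by rewrite scaler_nat mulr2n h.
move/eqP; rewrite scaler_eq0 (negbTE two_ne0) /= => /eqP //.
Qed.

Lemma two_inj (u v : A) : u + u = v + v -> u = v.
Proof.
move=> h; apply/eqP; rewrite -subr_eq0; apply/eqP/two0.
have -> : u - v + (u - v) = (u + u) - (v + v) by ncr.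
by rewrite h subrr.
Qed.

Lemma eq_via (L R G : A) : L = R -> G = L - R -> G = 0.
Proof. by move=> -> ->; rewrite subrr. Qed.
Arguments eq_via {L R G}.
Lemma eq_via3 (L R P Q G : A) : L = R -> P = 0 -> Q = 0 -> G = L - R - P - Q -> G = 0.
Proof. by move=> -> -> -> ->; rewrite subrr !subr0. Qed.
Arguments eq_via3 {L R P Q G}.

Section Lin.
Variable f : A -> A.
Hypothesis hf : linear f.
Lemma linD u v : f (u + v) = f u + f v.
Proof. by have := hf 1 u v; rewrite !scale1r. Qed.
Lemma lin0 : f 0 = 0.
Proof. by apply: (addrI (f 0)); rewrite -linD !addr0. Qed.
Lemma linN u : f (- u) = - f u.
Proof. by apply: (addrI (f u)); rewrite -linD !subrr lin0. Qed.
Lemma linB u v : f (u - v) = f u - f v.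
Proof. by rewrite linD linN. Qed.
Lemma linZ (c : F) u : f (c *: u) = c *: f u.
Proof. by have := hf c u 0; rewrite !addr0 lin0 addr0. Qed.
End Lin.
Arguments linD {f} hf u v.
Arguments lin0 {f} hf.
Arguments linN {f} hf u.
Arguments linB {f} hf u v.
Arguments linZ {f} hf c u.

Lemma sandwich (p q : A) : (forall r, p * r * q + q * r * p = 0) -> forall r, p * r * q = 0.
Proof.
move=> H r; apply: hsp => y.
have E : forall z, p * z * q = - (q * z * p).
  by move=> z; apply/eqP; rewrite -subr_eq0 opprK; apply/eqP; apply: H.
apply: two0.
have h1 := E (r * q * y * p * r).
have E' : forall z, q * z * p = - (p * z * q).
  by move=> z; rewrite E opprK.
have h2 := E' (r * q * y).
have h3 := E r.
have e1 : p * r * q * y * (p * r * q) = p * (r * q * y * p * r) * q by ncr.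
have e2 : q * (r * q * y * p * r) * p = q * (r * q * y) * p * r * p by ncr.
have e3 : p * r * q * y * (p * r * q) = p * r * q * y * q * r * p.
  rewrite e1 h1 e2 h2; ncr.
have e4 : p * r * q * y * q * r * p = - (q * r * p * y * q * r * p).
  have -> : p * r * q * y * q * r * p = (p * r * q) * (y * q * r * p) by ncr.
  rewrite h3; ncr.
have e5 : p * r * q * y * (p * r * q) = q * r * p * y * (q * r * p).
  rewrite h3; ncr.
rewrite {1}e3 e4 e5; ncr.
Qed.

Section JD.
Variable D : A -> A.
Hypothesis hD : linear D.
Hypothesis hJ : forall x y, D (jprod x y) = jprod (D x) y + jprod x (D y).

Lemma triple x y z : D (x*y*z + z*y*x) =
  D x*y*z + x*D y*z + x*y*D z + D z*y*x + z*D y*x + z*y*D x.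
Proof.
apply: two_inj; rewrite -(linD hD).
have e : (x*y*z + z*y*x) + (x*y*z + z*y*x) =
   jprod x (jprod y z) + jprod (jprod x y) z - jprod y (jprod x z) by rewrite /jprod; ncr.
rewrite e (linB hD) (linD hD) !hJ /jprod; ncr.
Qed.

Lemma xyx x y : D (x*y*x) = D x*y*x + x*D y*x + x*y*D x.
Proof.
apply: two_inj; rewrite -(linD hD) triple; ncr.
Qed.

Definition dl x y := D (x*y) - D x * y - x * D y.

Lemma dl_anti x y : dl y x = - dl x y.
Proof.
have := hJ x y; rewrite /jprod (linD hD) => h.
have : dl y x + dl x y = 0 by apply: (eq_via h); rewrite /dl; ncr.
by move/eqP; rewrite addr_eq0 => /eqP.
Qed.

Lemma herstein x y r : dl x y * r * (x*y - y*x) + (x*y - y*x) * r * dl x y = 0.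
Proof.
have h1 := triple (x*y) r (y*x).
have e : x*y*r*(y*x) + y*x*r*(x*y) = x*(y*r*y)*x + y*(x*r*x)*y by ncr.
rewrite e (linD hD) (xyx x (y*r*y)) (xyx y (x*r*x)) (xyx y r) (xyx x r) in h1.
have hP : D (x*y) = dl x y + D x * y + x * D y by rewrite /dl; ncr.
have hQ : D (y*x) = - dl x y + D y * x + y * D x by rewrite -dl_anti /dl; ncr.
rewrite hP hQ in h1.
apply: (eq_via h1); ncr.
Qed.

Lemma dlDl x u y : dl (x + u) y = dl x y + dl u y.
Proof. by rewrite /dl mulrDl (linD hD) (linD hD); ncr. Qed.
Lemma dlDr x y v : dl x (y + v) = dl x y + dl x v.
Proof. by rewrite /dl mulrDr (linD hD) (linD hD); ncr. Qed.

Lemma L1 x y r : dl x y * r * (x*y - y*x) = 0.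
Proof. by apply: sandwich => s; apply: herstein. Qed.
Lemma L1' x y r : (x*y - y*x) * r * dl x y = 0.
Proof. by apply: sandwich => s; rewrite addrC; apply: herstein. Qed.

Lemma L2 x u y r : dl x y * r * (u*y - y*u) = 0.
Proof.
have h := L1 (x + u) y r.
rewrite dlDl in h.
set X := dl x y * r * (u*y - y*u).
set Y := dl u y * r * (x*y - y*x).
have hXY : X + Y = 0.
  apply: (eq_via3 h (L1 x y r) (L1 u y r)); rewrite /X /Y; ncr.
apply: hsp => s.
have -> : X * s * X = - (dl x y * r * ((u*y - y*u) * s * dl u y) * r * (x*y - y*x)) + X * s * (X + Y).
  rewrite /X /Y; ncr.
by rewrite L1' hXY; ncr.
Qed.

Lemma L2' x u y r : (u*y - y*u) * r * dl x y = 0.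
Proof.
have h := L1' (x + u) y r.
rewrite dlDl in h.
set X := (u*y - y*u) * r * dl x y.
set Y := (x*y - y*x) * r * dl u y.
have hXY : X + Y = 0.
  apply: (eq_via3 h (L1' x y r) (L1' u y r)); rewrite /X /Y; ncr.
apply: hsp => s.
have -> : X * s * X = - ((x*y - y*x) * r * (dl u y * s * (u*y - y*u)) * r * dl x y) + (X + Y) * s * X.
  rewrite /X /Y; ncr.
by rewrite L1 hXY; ncr.
Qed.

Lemma L3 x y u v r : dl x y * r * (u*v - v*u) = 0.
Proof.
have h := L2 x u (y + v) r.
rewrite dlDr in h.
set X := dl x y * r * (u*v - v*u).
set Y := dl x v * r * (u*y - y*u).
have hXY : X + Y = 0.
  apply: (eq_via3 h (L2 x u y r) (L2 x u v r)); rewrite /X /Y; ncr.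
apply: hsp => s.
have -> : X * s * X = - (dl x y * r * ((u*v - v*u) * s * dl x v) * r * (u*y - y*u)) + X * s * (X + Y).
  rewrite /X /Y; ncr.
by rewrite L2' hXY; ncr.
Qed.

Lemma dl_cent x y t : dl x y * t = t * dl x y.
Proof.
apply/eqP; rewrite -subr_eq0; apply/eqP; apply: hsp => r.
have -> : (dl x y * t - t * dl x y) * r * (dl x y * t - t * dl x y) =
  dl x y * (t * r) * (dl x y * t - t * dl x y) - t * (dl x y * r * (dl x y * t - t * dl x y)) by ncr.
by rewrite !L3; ncr.
Qed.

Lemma dl0 x y : dl x y = 0.
Proof.
set c := dl x y.
have cent : forall t, c * t = t * c by move=> t; apply: dl_cent.
have cz : forall u v, c * (u*v - v*u) = 0.
  by move=> u v; have := L3 x y u v 1; rewrite mulr1.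
set z := x*y - y*x.
have E0 := hJ c z.
have jz : jprod c z = 0 by rewrite /jprod -cent cz addr0.
rewrite jz (lin0 hD) /jprod in E0.
have cz0 : c * z = 0 by apply: cz.
have ccDz : c * c * D z = 0.
  apply: two0.
  have e : c * c * D z + c * c * D z =
    c * (D c * z + z * D c + (c * D z + D z * c))
    - c * D c * z - c * z * D c + c * (c * D z) - c * (D z * c) by ncr.
  have h1 : c * D c * z = 0 by rewrite (cent (D c)) -mulrA cz0 mulr0.
  have h2 : c * z * D c = 0 by rewrite cz0 mul0r.
  have h3 : c * (D z * c) = c * (c * D z) by rewrite -(cent (D z)).
  by rewrite e -E0 h1 h2 h3 mulr0 !subr0 addrK.
have two_c : c + c = D z - (D x * y - y * D x) - (x * D y - D y * x).
  have h := dl_anti x y.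
  apply/eqP; rewrite -subr_eq0; apply/eqP; apply: (eq_via h).
  rewrite /c /z /dl (linB hD); ncr.
have c3 : c * c * c = 0.
  apply: two0.
  have e : c * c * c + c * c * c = c * c * (c + c) by ncr.
  rewrite e two_c.
  have e2 : c * c * (D z - (D x * y - y * D x) - (x * D y - D y * x)) =
     c * c * D z - c * (c * (D x * y - y * D x)) - c * (c * (x * D y - D y * x)) by ncr.
  by rewrite e2 ccDz !cz; ncr.
have cc : c * c = 0.
  apply: hsp => r.
  have -> : c * c * r * (c * c) = c * c * (r * c) * c by ncr.
  rewrite -(cent r).
  have -> : c * c * (c * r) * c = c * c * c * (r * c) by ncr.
  by rewrite c3 !mul0r.
apply: hsp => r.
by rewrite -mulrA -(cent r) mulrA cc mul0r.
Qed.

End JD.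

Definition ad (a u : A) := a * u - u * a.

Section AC.
Variables (f : A -> A) (a : A).
Definition Mx (v w : A) := (jprod (f v) w + jprod v (f w) - f (v*w) - f (w*v))
   + (jprod (f v) w + jprod v (f w) - f (v*w) - f (w*v)) - jprod (jprod v w) a.
Hypothesis hM : forall v w, Mx v w = 0.

Lemma identI y : ad a (ad a (ad a (ad a y))) = 0.
Proof.
apply: two0.
have H : ad a (ad a (ad a (ad a y))) + ad a (ad a (ad a (ad a y))) =
  (Mx (a) (a) * (y * a)) + (Mx (a) (a) * (y * a)) + (Mx (a) (a) * (y * a)) - ((Mx (a) (a * y) * (a)) + (Mx (a) (a * y) * (a))) - ((Mx (a) (y * a) * (a)) + (Mx (a) (y * a) * (a))) - ((Mx (a) (a * a) * (y)) + (Mx (a) (a * a) * (y))) + (Mx (a) (a * a * y)) + (Mx (a) (a * a * y)) - ((Mx (a) (a * y * a)) + (Mx (a) (a * y * a)) + (Mx (a) (a * y * a)) + (Mx (a) (a * y * a))) + (Mx (a) (y * a * a)) + (Mx (a) (y * a * a)) + (Mx (a * a) (y) * (a)) + (Mx (a * a) (y) * (a)) + (Mx (a * a) (y) * (a)) + (Mx (a * a) (y) * (a)) + (Mx (a * a) (a * y)) + (Mx (a * a) (a * y)) + (Mx (a * a) (y * a)) + (Mx (a * a) (y * a)) - ((Mx (a * a * a) (y)) + (Mx (a * a * a) (y)) + (Mx (a * a * a) (y)) + (Mx (a * a * a) (y))) + ((y) * Mx (a) (a) * (a)) - (((y) * Mx (a) (a * a)) + ((y) * Mx (a) (a * a)))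 - (((a) * Mx (a) (y) * (a)) + ((a) * Mx (a) (y) * (a)) + ((a) * Mx (a) (y) * (a)) + ((a) * Mx (a) (y) * (a))) + ((a) * Mx (a) (a) * (y)) - (((a) * Mx (a) (a * y)) + ((a) * Mx (a) (a * y))) - (((a) * Mx (a) (y * a)) + ((a) * Mx (a) (y * a))) + ((a) * Mx (a * a) (y)) + ((a) * Mx (a * a) (y)) + ((a) * Mx (a * a) (y)) + ((a) * Mx (a * a) (y)) + ((a * y) * Mx (a) (a)) + ((a * y) * Mx (a) (a)) + ((a * y) * Mx (a) (a)).
  rewrite /Mx /jprod /ad ?mulrA; ncr.
by rewrite H !hM !(mulr0, mul0r, addr0, oppr0, add0r, subr0).
Qed.

Lemma identII x y : (ad a (ad a (ad a x)) * y - y * ad a (ad a (ad a x)))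
   + ((ad a (ad a x) * ad a y - ad a y * ad a (ad a x)) + (ad a (ad a x) * ad a y - ad a y * ad a (ad a x))) = 0.
Proof.
apply: two0.
set T := (X in X + X = 0).
have H : T + T = (Mx (x) (y) * (a * a)) - ((Mx (x) (y * a) * (a)) + (Mx (x) (y * a) * (a))) + (Mx (x) (y * a * a)) + (Mx (a) (y) * (a * x)) - ((Mx (a) (y) * (x * a)) + (Mx (a) (y) * (x * a))) + (Mx (a) (x) * (a * y)) + (Mx (a) (x * y) * (a)) + (Mx (a) (y * x) * (a)) - ((Mx (a) (a) * (x * y))) + (Mx (a) (a * y) * (x)) + (Mx (a) (y * a) * (x)) + (Mx (a) (a * x) * (y)) + (Mx (a) (x * a) * (y)) + (Mx (a) (a * x * y)) - ((Mx (a) (a * y * x))) - ((Mx (a) (x * a * y)) + (Mx (a) (x * a * y))) - ((Mx (a) (x * y * a))) - ((Mx (a) (y * a * x)) + (Mx (a) (y * a * x))) + (Mx (a) (y * x * a)) - ((Mx (a * y) (x) * (a)) + (Mx (a * y) (x) * (a))) - ((Mx (a * a) (x) * (y)) + (Mx (a * a) (x) * (y))) + (Mx (a * a * y) (x)) + (Mx (a * y * a) (x)) + (Mx (a * y * a) (x)) - ((Mx (a * a * x) (y))) + (Mx (a * x * a) (y)) + (Mx (a * x * a) (y)) - ((Mx (x * a * a) (y))) + ((y) * Mx (a) (x) * (a)) - (((y) * Mx (a) (a) * (x))) + ((y) * Mx (a) (a * x)) + ((y) * Mx (a) (x * a)) - (((y) * Mx (a * a) (x)) + ((y) * Mx (a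 * a) (x))) - (((x) * Mx (a) (y) * (a))) - (((x) * Mx (a) (a) * (y))) + ((x) * Mx (a) (a * y)) + ((x) * Mx (a) (y * a)) - (((y * x) * Mx (a) (a))) + ((a) * Mx (x) (y) * (a)) + ((a) * Mx (x) (y) * (a)) - (((a) * Mx (x) (y * a)) + ((a) * Mx (x) (y * a))) - (((a) * Mx (a) (y) * (x))) + ((a) * Mx (a) (x) * (y)) + ((a) * Mx (a) (x * y)) + ((a) * Mx (a) (y * x)) - (((a) * Mx (a * y) (x)) + ((a) * Mx (a * y) (x))) + ((y * a) * Mx (a) (x)) - (((a * x) * Mx (a) (y)) + ((a * x) * Mx (a) (y))) + ((x * a) * Mx (a) (y)) + ((a * a) * Mx (x) (y)).
  rewrite /T /Mx /jprod /ad ?mulrA; ncr.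
by rewrite H !hM !(mulr0, mul0r, addr0, oppr0, add0r, subr0).
Qed.

End AC.

Lemma Glem (a s : A) : (forall u, ad a s * ad a u = ad a u * ad a s) ->
  ad a s * s = s * ad a s -> forall t, ad a s * t = t * ad a s.
Proof.
move=> h1 h2.
set w := ad a s.
have C : forall u, w * ad a u - ad a u * w = 0 by move=> u; rewrite h1 subrr.
have key : forall z t, w * z * (w * t - t * w) = 0.
  move=> z t.
  have E : w * z * (w * t - t * w) =
     (w * ad a (s*z*t) - ad a (s*z*t) * w) - s * (w * ad a (z*t) - ad a (z*t) * w)
     - (w * ad a (s*z) - ad a (s*z) * w) * t + s * (w * ad a z - ad a z * w) * t
     - (w * s - s * w) * z * ad a t by rewrite /w /ad; ncr.
  by rewrite E !C h2 subrr; ncr.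
move=> t; apply/eqP; rewrite -subr_eq0; apply/eqP; apply: hsp => r.
have -> : (w * t - t * w) * r * (w * t - t * w) =
   w * (t * r) * (w * t - t * w) - t * (w * r * (w * t - t * w)) by ncr.
by rewrite !key; ncr.
Qed.

Lemma Hlem (a : A) (Phi Psi : A -> A) : (forall x t, Phi x * t = t * Phi x) ->
  (forall x, Phi (x * a) = Phi x * a) -> (forall x, Phi x = ad a (Psi x)) ->
  forall x, Phi x = 0.
Proof.
move=> hc ha hp x.
have cd : forall r, Phi x * ad a r = 0.
  move=> r.
  have -> : Phi x * ad a r = (Phi x * a) * r - r * (Phi x * a).
    by rewrite /ad mulrBr !mulrA (hc x r).
  by rewrite -ha hc subrr.
have cc : Phi x * Phi x = 0 by rewrite {2}hp cd.
apply: hsp => r.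
by rewrite -mulrA -(hc x r) mulrA cc mul0r.
Qed.

Lemma acent (a : A) :
  (forall y, ad a (ad a (ad a (ad a y))) = 0) ->
  (forall x y, (ad a (ad a (ad a x)) * y - y * ad a (ad a (ad a x)))
   + ((ad a (ad a x) * ad a y - ad a y * ad a (ad a x)) + (ad a (ad a x) * ad a y - ad a y * ad a (ad a x))) = 0) ->
  forall t, a * t = t * a.
Proof.
move=> hI hII.
have h1 : forall x y, ad a (ad a (ad a x)) * ad a y = ad a y * ad a (ad a (ad a x)).
  move=> x y; have := hII (ad a x) y; rewrite hI mul0r mulr0 subrr add0r => /two0 /eqP.
  by rewrite subr_eq0 => /eqP.
have c3 : forall x t, ad a (ad a (ad a x)) * t = t * ad a (ad a (ad a x)).
  move=> x; apply: Glem; first by move=> u; apply: h1.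
  exact: h1.
have z3 : forall x, ad a (ad a (ad a x)) = 0.
  apply: (Hlem a (fun x => ad a (ad a (ad a x))) (fun x => ad a (ad a x))) => //.
  by move=> x; rewrite /ad; ncr.
have h2 : forall x y, ad a (ad a x) * ad a y = ad a y * ad a (ad a x).
  move=> x y; have := hII x y; rewrite z3 mul0r mulr0 subrr add0r => /two0 /eqP.
  by rewrite subr_eq0 => /eqP.
have c2 : forall x t, ad a (ad a x) * t = t * ad a (ad a x).
  move=> x; apply: Glem; first by move=> u; apply: h2.
  exact: h2.
have z2 : forall x, ad a (ad a x) = 0.
  apply: (Hlem a (fun x => ad a (ad a x)) (fun x => ad a x)) => //.
  by move=> x; rewrite /ad; ncr.
have z1 : forall x y, ad a x * ad a y = 0.
  move=> x y; apply: two0.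
  have P0 : ad a (ad a x) * y = 0 by rewrite z2 mul0r.
  have Q0 : x * ad a (ad a y) = 0 by rewrite z2 mulr0.
  apply: (eq_via3 (z2 (x * y)) P0 Q0); rewrite /ad; ncr.
move=> t; apply/eqP; rewrite -subr_eq0; apply/eqP.
apply: hsp => r.
have -> : (a * t - t * a) * r * (a * t - t * a) = ad a t * ad a (r * t) - ad a t * ad a r * t by rewrite /ad; ncr.
by rewrite !z1 mul0r subrr.
Qed.

Lemma comm_cent (c : A) : (forall x y, c * (x*y - y*x) = (x*y - y*x) * c) ->
  forall t, c * t = t * c.
Proof.
move=> H.
have H0 : forall x y, c * (x*y - y*x) - (x*y - y*x) * c = 0 by move=> x y; rewrite H subrr.
have key : forall x z, (x*c - c*x) * (c*z - z*c) = 0.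
  move=> x z.
  have -> : (x*c - c*x) * (c*z - z*c) =
    (c * (x*(c*z) - (c*z)*x) - (x*(c*z) - (c*z)*x) * c)
    - (c * (x*c - c*x) - (x*c - c*x) * c) * z
    - c * (c * (x*z - z*x) - (x*z - z*x) * c) by ncr.
  by rewrite !H0 mul0r mulr0 !subr0.
move=> t; apply/eqP; rewrite -subr_eq0; apply/eqP; apply: hsp => r.
have -> : (c*t - t*c) * r * (c*t - t*c) =
  - ((t*c - c*t) * (c*(r*t) - (r*t)*c)) + (t*c - c*t) * (c*r - r*c) * t by ncr.
by rewrite !key mul0r oppr0 addr0.
Qed.

Lemma eq_viaM (v L1 R1 L2 R2 L3 R3 P G : A) : L1 = R1 -> L2 = R2 -> L3 = R3 -> P = 0 ->
  G = (L1 - R1) + (L1 - R1) - (v * (L2 - R2) + (L2 - R2) * v) - (L3 - R3) - P -> G = 0.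
Proof. by move=> -> -> -> -> ->; rewrite !subrr mulr0 mul0r !addr0 !subr0. Qed.
Arguments eq_viaM v {L1 R1 L2 R2 L3 R3 P G}.

Lemma forward (f : A -> A) : GJDer f ->
  exists c d : A -> A, Cent c /\ Der d /\ f = (fun x => c x + d x).
Proof.
case=> hf [g [h [hg [hh hR]]]].
set a := f 1; set b := g 1.
have R1 : forall y, jprod a y + (g y + g y) = h y + h y.
  move=> y; have := hR 1 y; rewrite /jprod !mul1r !mulr1 (linD hh) => <-.
  by [].
have R2 : forall x, f x + f x + jprod x b = h x + h x.
  move=> x; have := hR x 1; rewrite {1}/jprod !mul1r !mulr1 {2}/jprod !mul1r !mulr1 (linD hh) => <-.
  by [].
have Sym : forall x y, jprod (f x) y + jprod x (g y) = jprod (f y) x + jprod y (g x).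
  by move=> x y; rewrite hR hR /jprod addrC.
set c := b - a.
have g2 : forall y, g y + g y = f y + f y + jprod c y.
  move=> y.
  have -> : g y + g y = (jprod a y + (g y + g y)) - jprod a y by ncr.
  rewrite R1 -R2 /c /jprod; ncr.
have ccomm : forall x y, c * (x*y - y*x) = (x*y - y*x) * c.
  move=> x y.
  have s2 : jprod (f x) y + jprod (f x) y + jprod x (g y + g y) =
            jprod (f y) x + jprod (f y) x + jprod y (g x + g x).
    have -> : jprod (f x) y + jprod (f x) y + jprod x (g y + g y) =
       (jprod (f x) y + jprod x (g y)) + (jprod (f x) y + jprod x (g y)) by rewrite /jprod; ncr.
    rewrite Sym /jprod; ncr.
  rewrite g2 g2 in s2.
  apply/eqP; rewrite -subr_eq0; apply/eqP; apply: (eq_via (esym s2)).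
  rewrite /jprod; ncr.
have ccent := comm_cent c ccomm.
have hM : forall v w, Mx f a v w = 0.
  move=> v w.
  have e1 := hR v w.
  have e2 := g2 w.
  have e3 := R2 (jprod v w).
  rewrite {1 2}/jprod (linD hf) in e3.
  have P0 : (v*c - c*v) * w - w * (v*c - c*v) = 0 by rewrite -(ccent v) subrr mul0r mulr0 subrr.
  apply: (eq_viaM v e1 e2 e3 P0).
  rewrite /Mx /jprod /c; ncr.
have acen : forall t, a * t = t * a.
  apply: acent; first by move=> y; exact: (@identI f a hM y).
  by move=> x y; exact: (@identII f a hM x y).
set D := fun x => f x - a * x.
have hD : linear D.
  move=> k u v; rewrite /D (linD hf) (linZ hf) mulrDr -scalerAr scalerBr; ncr.
have hJD : forall x y, D (jprod x y) = jprod (D x) y + jprod x (D y).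
  move=> x y; apply: two_inj.
  have m := hM x y.
  have ax : ad a x = 0 by rewrite /ad acen subrr.
  have ay : ad a y = 0 by rewrite /ad acen subrr.
  apply/eqP; rewrite -subr_eq0; apply/eqP.
  have -> : D (jprod x y) + D (jprod x y) - (jprod (D x) y + jprod x (D y) + (jprod (D x) y + jprod x (D y)))
     = - Mx f a x y + x * ad a y + y * ad a x - ad a x * y - ad a y * x.
    by rewrite /D /Mx /jprod /ad (linD hf); ncr.
  by rewrite m ax ay !(mulr0, mul0r, oppr0, addr0, subr0).
exists (fun x => a * x), D; split; last split.
- split.
    by move=> k u v; rewrite mulrDr -scalerAr.
  move=> x y; split; first by rewrite mulrA.
  by rewrite mulrA acen -mulrA.
- split; first exact: hD.
  move=> x y; have := @dl0 D hD hJD x y; rewrite /dl => hdl.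
  by apply/eqP; rewrite -subr_eq0 opprD addrA hdl.
- by apply: functional_extensionality => x; rewrite /D addrC subrK.
Qed.

Lemma backward (f : A -> A) : (exists c d : A -> A, Cent c /\ Der d /\ f = (fun x => c x + d x)) ->
  GJDer f.
Proof.
case=> c [d [[hc hc2] [[hd hd2] ->]]].
have lf : linear (fun x => c x + d x).
  by move=> k u v; rewrite (linD hc) (linD hd) (linZ hc) (linZ hd) scalerDr; ncr.
split; first exact: lf.
exists d, (fun x => c x + d x); split; first exact: hd.
split; first exact: lf.
move=> x y; rewrite /jprod (linD hc) (linD hd) !hd2.
case: (hc2 x y) => e1 _; case: (hc2 y x) => _ e2.
rewrite e1 e2; ncr.
Qed.

End NC.



Theorem theorem2p3 (F : fieldType) (A : algType F) :
  2 \notin [pchar F] -> semiprime A ->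
  forall f : A -> A,
    GJDer f <-> exists c d : A -> A, Cent c /\ Der d /\ f = (fun x => c x + d x).
Proof.
move=> hc hs f; split.
- exact: (@forward F A hc hs f).
- exact: (@backward F A f).
Qed.
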